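(* Let $Z=(z_{ij})$ be the generic $n\times n$ matrix of variables, and let $I,J\subseteq\{1,\ldots,n\}$ with $|I|=|J|$. Suppose every variable dividing the antidiagonal term of the minor $\Delta_{I,J}(Z)$ lies on or above the main antidiagonal of $Z$ (i.e. is some $z_{ij}$ with $i+j\le n+1$). Then among the monomials appearing in $\Delta_{I,J}(Z)$, the antidiagonal term is the unique one of lowest $\omega$-weight.
   Context: $\omega=(\omega_{ij})$ is the integer matrix with $\omega_{ij}=3^{\,n-i-j}$ if $i+j\le n$ and $\omega_{ij}=0$ if $i+j>n$. The $\omega$-weight of a monomial $\prod z_{ij}^{e_{ij}}$ in $\mathbb{C}[z_{ij}]$ is $\sum e_{ij}\omega_{ij}$. $\Delta_{I,J}(Z)$ denotes the minor of $Z$ with row set $I$ and column set $J$; its antidiagonal term is the product of the entries on the main antidiagonal of the corresponding square submatrix (taking rows and columns in increasing order), i.e. for $I=\{i_1<\cdots<i_k\}$, $J=\{j_1<\cdots<j_k\}$ it is $\prod_{r=1}^k z_{i_r,j_{k+1-r}}$. *)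

(* Defs.v *)
From HB Require Import structures.
From mathcomp Require Import all_boot all_order all_algebra all_field.
From mathcomp.multinomials Require Import mpoly.
Set Implicit Arguments. Unset Strict Implicit. Unset Printing Implicit Defensive.
Import GRing.Theory.
Local Open Scope ring_scope.

(* Conventions: indices are 0-based ('I_n), so the paper's z_{i+1,j+1}
   is our entry (i, j). *)

Definition genZ (n : nat) : 'M[{mpoly algC[n * n]}]_n :=
  \matrix_(i < n, j < n) 'X_(mxvec_index i j).

Definition omega (n : nat) (i j : 'I_n) : nat :=
  if (i.+1 + j.+1 <= n)%N then (3 ^ (n - i.+1 - j.+1))%N else 0%N.

Definition oweight (n : nat) (m : 'X_{1..n * n}) : nat :=
  (\sum_(i < n) \sum_(j < n) m (mxvec_index i j) * omega i j)%N.

(* A subset of {1..n} of size k, given by its strictly increasing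
   enumeration r : 'I_k -> 'I_n. *)
Definition incr (k n : nat) (r : 'I_k -> 'I_n) : Prop :=
  forall a b : 'I_k, (a < b)%N -> (r a < r b)%N.

Definition minor (n : nat) {k : nat} (r c : 'I_k -> 'I_n) : {mpoly algC[n * n]} :=
  \det (\matrix_(a < k, b < k) genZ n (r a) (c b)).

Definition antidiag_term (n : nat) {k : nat} (r c : 'I_k -> 'I_n) : {mpoly algC[n * n]} :=
  \prod_(a < k) genZ n (r a) (c (rev_ord a)).
Arguments minor n {k} r c.
Arguments antidiag_term n {k} r c.

(* Main.v *)
Require Import Defs.
From HB Require Import structures.
From mathcomp Require Import all_boot all_order all_algebra all_field all_fingroup.
From mathcomp.multinomials Require Import mpoly.
From mathcomp Require Import zify.
Local Open Scope ring_scope.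
Import GRing.Theory.

Lemma omega_pos n (i j : 'I_n) : (i.+1 + j.+1 <= n)%N -> (0 < omega i j)%N.
Proof. by rewrite /omega => ->; rewrite expn_gt0. Qed.

Lemma omega_monoj n (i : 'I_n) {j j' : 'I_n} : (j < j')%N -> (omega i j' * 3 <= omega i j)%N.
Proof.
rewrite /omega => hj; case: ifP => h; last by rewrite mul0n.
have -> : (i.+1 + j.+1 <= n)%N by lia.
rewrite -expnSr leq_exp2l //; lia.
Qed.

Lemma omega_monoi n {i i' : 'I_n} (j : 'I_n) : (i < i')%N -> (omega i' j * 3 <= omega i j)%N.
Proof.
rewrite /omega => hj; case: ifP => h; last by rewrite mul0n.
have -> : (i.+1 + j.+1 <= n)%N by lia.
rewrite -expnSr leq_exp2l //; lia.
Qed.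

Lemma omega2 n (i1 i2 j1 j2 : 'I_n) : (i1 < i2)%N -> (j1 < j2)%N ->
  (i1.+1 + j2.+1 <= n.+1)%N ->
  (omega i1 j2 + omega i2 j1 < omega i1 j1 + omega i2 j2)%N.
Proof.
move=> hi hj h.
have h1 := @omega_monoj _ i1 _ _ hj. have h2 := @omega_monoi _ _ _ j1 hi.
have h3 : (0 < omega i1 j1)%N by apply: omega_pos; lia.
lia.
Qed.

Definition W n k (r c : 'I_k -> 'I_n) (s : 'S_k) : nat :=
  (\sum_(a < k) omega (r a) (c (s a)))%N.
Arguments W {n k} r c s.

Lemma sum2 k (F : 'I_k -> nat) (a b : 'I_k) : b != a ->
  (\sum_(x < k) F x = F a + F b + \sum_(x < k | (x != a) && (x != b)) F x)%N.
Proof.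
move=> nab; rewrite (bigD1 a) //= (bigD1 b) //= addnA.
by congr (_ + _)%N; apply: eq_bigl => x; rewrite andbC.
Qed.

Lemma W_swap n k (r c : 'I_k -> 'I_n) (s : 'S_k) (a b : 'I_k) :
  incr r -> incr c -> (a < b)%N -> (s a < s b)%N ->
  ((r a).+1 + (c (s b)).+1 <= n.+1)%N ->
  (W r c (tperm a b * s) < W r c s)%N.
Proof.
move=> hr hc hab hs h.
have nab : b != a by rewrite neq_ltn hab orbT.
rewrite /W (sum2 _ _ _ _ nab) [X in (_ < X)%N](sum2 _ _ _ _ nab).
rewrite !permM tpermL tpermR.
rewrite (eq_bigr (fun x => omega (r x) (c (s x)))); last first.
  by move=> x /andP [hxa hxb]; rewrite permM tpermD // eq_sym.
have := @omega2 _ _ _ _ _ (hr _ _ hab) (hc _ _ hs) h.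
by rewrite ltn_add2r.
Qed.

Definition rho k : 'S_k := perm (@rev_ord_inj k).

Lemma W_min n k (r c : 'I_k -> 'I_n) :
  incr r -> incr c ->
  (forall a : 'I_k, ((r a).+1 + (c (rev_ord a)).+1 <= n.+1)%N) ->
  forall s : 'S_k, s != rho k -> (W r c (rho k) < W r c s)%N.
Proof.
move=> hr hc H s.
have [N] := ubnP #|[pred x | s x != rho k x]|.
elim: N s => // N IH s hN hs.
pose P := [pred x | s x != rho k x].
have [x0 Px0] : exists x, P x.
  apply/existsP; apply: contraR hs => /existsPn h; apply/eqP/permP => x.
  by have := h x; rewrite /= negbK => /eqP.
case: (arg_minnP (fun x : 'I_k => val x) Px0) => a Pa amin.
have rhoE x : rho k x = rev_ord x by rewrite permE.
pose b := (s^-1)%g (rho k a).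
have sb : s b = rho k a by rewrite /b permKV.
have ab : (a < b)%N.
  rewrite ltnNge leq_eqVlt negb_or; apply/andP; split.
    apply/negP => /eqP/val_inj ba; move: Pa; rewrite /= -sb -ba eqxx //.
  apply/negP => ba.
  have : ~~ P b by apply/negP => /amin; rewrite leqNgt ba.
  rewrite /= negbK sb => /eqP/perm_inj ab'.
  by move: ba; rewrite ab' ltnn.
have sa : (s a < s b)%N.
  rewrite sb ltn_neqAle; apply/andP; split.
    by apply: contra Pa => /eqP/val_inj ->.
  rewrite leqNgt; apply/negP => lt.
  pose a' := rev_ord (s a).
  have a'a : (a' < a)%N.
    move: lt; rewrite rhoE /a' /=; have := ltn_ord a; have := ltn_ord (s a); lia.
  have : ~~ P a' by apply/negP => /amin; rewrite leqNgt a'a.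
  rewrite /= negbK rhoE /a' rev_ordK => /eqP/perm_inj h.
  by move: a'a; rewrite /a' h ltnn.
have Ha := H a; rewrite -rhoE -sb in Ha.
have lt1 := @W_swap _ _ r c s a b hr hc ab sa Ha.
set s' := (tperm a b * s)%g in lt1 *.
case: (eqVneq s' (rho k)) => [e|ne]; first by rewrite -e.
apply: ltn_trans lt1; apply: IH ne.
have sub : [pred x | s' x != rho k x] \subset [predD1 P & a].
  apply/subsetP => x; rewrite !inE /s' permM.
  case: (tpermP a b x) => [->|->|xa xb].
  - by rewrite sb eqxx.
  - move=> _; apply/andP; split; first by rewrite neq_ltn ab orbT.
    rewrite sb; apply/negP => /eqP/perm_inj ba.
    by move: ab; rewrite ba ltnn.
  - by move=> ->; rewrite andbT; apply/eqP.
apply: leq_ltn_trans (subset_leq_card sub) _.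
have e : #|[pred x | s x != rho k x]| = (1 + #|[predD1 P & a]|)%N.
  rewrite (cardD1 a P); congr (_ + _)%N; by rewrite /= inE; apply/eqP; rewrite eqb1; move: Pa; rewrite /P /= => ->.
by move: hN; rewrite e add1n ltnS.
Qed.

Lemma idx_eq m' n' (i i' : 'I_m') (j j' : 'I_n') :
  (mxvec_index i j == mxvec_index i' j') = (i == i') && (j == j').
Proof.
apply/eqP/andP => [h|[/eqP -> /eqP ->]] //.
have := congr1 (fun x => enum_val (cast_ord (esym (mxvec_cast m' n')) x)) h.
rewrite /mxvec_index !cast_ordK !enum_rankK => -[-> ->]; by [].
Qed.

Lemma sum_delta n (F : 'I_n -> 'I_n -> nat) (x y : 'I_n) :
  (\sum_(i < n) \sum_(j < n) ((x == i) && (y == j)) * F i j)%N = F x y.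
Proof.
rewrite (bigD1 x) //= [X in (_ + X)%N]big1 ?addn0; last first.
  by move=> i ni; apply: big1 => j _; rewrite eq_sym (negbTE ni).
rewrite (bigD1 y) //= [X in (_ + X)%N]big1 ?addn0 ?eqxx ?mul1n //.
by move=> j nj; rewrite eq_sym (negbTE nj) andbF.
Qed.

Definition mon n k (r c : 'I_k -> 'I_n) (s : 'S_k) : 'X_{1..n * n} :=
  (\sum_(a < k) U_(mxvec_index (r a) (c (s a))))%MM.
Arguments mon {n k} r c s.

Lemma oweight_mon n k (r c : 'I_k -> 'I_n) (s : 'S_k) :
  oweight (mon r c s) = W r c s.
Proof.
rewrite /oweight /W.
under eq_bigr => i _ do under eq_bigr => j _ do
  rewrite /mon mnm_sumE big_distrl /=.
under eq_bigr => i _ do rewrite exchange_big /=.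
rewrite exchange_big /=; apply: eq_bigr => a _.
rewrite -[RHS](@sum_delta _ (fun i j => omega i j) (r a) (c (s a))).
apply: eq_bigr => i _; apply: eq_bigr => j _.
by rewrite mnm1E idx_eq.
Qed.

Lemma prod_mon n k (r c : 'I_k -> 'I_n) (s : 'S_k) :
  \prod_(a < k) genZ n (r a) (c (s a)) = 'X_[mon r c s] :> {mpoly algC[n * n]}.
Proof.
rewrite /mon (big_morph (fun m => 'X_[m] : {mpoly algC[n * n]}) (@mpolyXD _ _) (@mpolyX0 _ _)).
by apply: eq_bigr => a _; rewrite mxE.
Qed.

Lemma minorE n k (r c : 'I_k -> 'I_n) :
  minor n r c = \sum_(s : 'S_k) (-1) ^+ s * 'X_[mon r c s].
Proof.
rewrite /minor /determinant; apply: eq_bigr => s _.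
by rewrite -prod_mon; congr (_ * _); apply: eq_bigr => a _; rewrite mxE.
Qed.

Lemma mcoeff_sign n (b : bool) (p : {mpoly algC[n]}) m :
  ((-1) ^+ b * p)@_m = (-1) ^+ b * p@_m.
Proof. by case: b => /=; rewrite ?expr0 ?expr1 ?mul1r ?mulN1r ?mcoeffN. Qed.

Lemma minor_coef n k (r c : 'I_k -> 'I_n) m :
  (minor n r c)@_m = \sum_(s : 'S_k) (-1) ^+ s * ((mon r c s == m)%:R : algC).
Proof.
rewrite minorE raddf_sum; apply: eq_bigr => s _.
by rewrite -mcoeffX; exact: mcoeff_sign.
Qed.

Theorem mainTheorem2 (n k : nat) (r c : 'I_k -> 'I_n) :
  incr r -> incr c ->
  (forall a : 'I_k, ((r a).+1 + (c (rev_ord a)).+1 <= n.+1)%N) ->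
  exists m0 : 'X_{1..n * n},
    antidiag_term n r c = 'X_[m0] /\
    m0 \in msupp (minor n r c) /\
    (forall m, m \in msupp (minor n r c) -> m != m0 ->
       (oweight m0 < oweight m)%N).
Proof.
move=> hr hc H.
have Wm := @W_min _ _ r c hr hc H.
exists (mon r c (rho k)); split.
  rewrite /antidiag_term -prod_mon; apply: eq_bigr => a _; by rewrite permE.
split.
  rewrite mcoeff_msupp minor_coef (bigD1 (rho k)) //= eqxx mulr1 big1 ?addr0.
    by rewrite signr_eq0.
  move=> s ns; have := Wm s ns; rewrite -!oweight_mon.
  case: eqP => [->|_]; first by rewrite ltnn.
  by rewrite mulr0.
move=> m; rewrite mcoeff_msupp minor_coef => nz nm.
have [s /eqP ms] : exists s : 'S_k, mon r c s == m.
  apply/existsP; apply: contraR nz => /existsPn h.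
  by apply/eqP; apply: big1 => s _; rewrite (negbTE (h s)) mulr0.
have ns : s != rho k by apply: contra nm => /eqP e; rewrite -ms e.
by rewrite -ms !oweight_mon; apply: Wm.
Qed.
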